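(* Let $\mathcal{G}$ be the complete quadrilateral, let $R$ be a commutative ring with $2=0$, let $A=M_R(\mathcal{G},1)$ and let $A'=A/\operatorname{Ann}(A)$ (a $5$-dimensional algebra). For each of the $4$ lines $\ell$ of $\mathcal{G}$, let $A'^\ell_0$ and $A'^\ell_1$ be the eigenspaces of the operator $\operatorname{ad}_\ell$ on $A'$ for the eigenvalues $0$ and $1$. Then for each line $\ell$, $A'=A'^\ell_0\oplus A'^\ell_1$ and \[ A'^\ell_0A'^\ell_0\subseteq A'^\ell_0,\quad A'^\ell_0A'^\ell_1\subseteq A'^\ell_1,\quad A'^\ell_1A'^\ell_1=0, \] i.e. $A'$ is a decomposition algebra with fusion law $0*0=\{0\}$, $0*1=1*0=\{1\}$, $1*1=\emptyset$. Moreover, the subspaces $A'^\ell_1$ coincide for all $4$ choices of $\ell$.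
   Context: The complete quadrilateral is the partial linear space with $6$ points $a,b,c,x,y,z$ and $4$ lines $\{a,b,c\}$, $\{a,y,z\}$, $\{b,x,z\}$, $\{c,x,y\}$. For distinct collinear points $p,q$ (written $p\sim q$), $p\wedge q$ is the third point of their line. The nilpotent Matsuo algebra $A=M_R(\mathcal{G},1)$ is the free $R$-module with basis the points and commutative bilinear product $p\cdot q=0$ if $p=q$ or $p\not\sim q$, $p\cdot q=p+q+p\wedge q$ if $p\sim q$. $\operatorname{Ann}(A)=\{v\in A: vw=0\ \forall w\in A\}$, and $A'=A/\operatorname{Ann}(A)$ with induced product. For a line $\ell$ we write $\ell$ also for the sum of its three points, and $\operatorname{ad}_\ell(v)=\ell v$ (also on $A'$). *)

(* Defs.v *)
From HB Require Import structures.
From mathcomp Require Import all_boot all_order all_algebra.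
Set Implicit Arguments. Unset Strict Implicit. Unset Printing Implicit Defensive.
Import GRing.Theory.
Local Open Scope ring_scope.

Definition pt := 'I_6.
Definition pa : pt := inord 0.
Definition pb : pt := inord 1.
Definition pc : pt := inord 2.
Definition px : pt := inord 3.
Definition py : pt := inord 4.
Definition pz : pt := inord 5.

Definition lines : seq {set pt} :=
  [:: [set pa; pb; pc]; [set pa; py; pz]; [set pb; px; pz]; [set pc; px; py]].

Definition coll (p q : pt) : bool :=
  (p != q) && has (fun l : {set pt} => (p \in l) && (q \in l)) lines.

(* p /\ q : the third point of the line through p and q (p if not collinear) *)
Definition wedge (p q : pt) : pt :=
  odflt p [pick r | [&& r != p, r != q &
     has (fun l : {set pt} => [&& p \in l, q \in l & r \in l]) lines]].

Section Matsuo.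
Variable R : comPzRingType.

(* A = M_R(G,1): free R-module with basis the points, realised as 'rV[R]_6 *)
Definition A := 'rV[R]_6.
Definition bvec (p : pt) : A := delta_mx 0 p.

Definition bprod (p q : pt) : A :=
  if coll p q then bvec p + bvec q + bvec (wedge p q) else 0.

Definition amul (u v : A) : A :=
  \sum_(p : pt) \sum_(q : pt) (u 0 p * v 0 q) *: bprod p q.

Definition ann (v : A) : Prop := forall w : A, amul v w = 0.

Definition lvec (l : {set pt}) : A := \sum_(p in l) bvec p.

(* A' = A / Ann(A) is handled through representatives: v in A represents
   the class v + Ann(A).  [eig0 l v] says the class of v lies in the
   0-eigenspace A'^l_0 of ad_l on A', i.e. l v = 0 in A';
   [eig1 l v] says the class of v lies in A'^l_1, i.e. l v = v in A'. *)
Definition eig0 (l : {set pt}) (v : A) : Prop := ann (amul (lvec l) v).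
Definition eig1 (l : {set pt}) (v : A) : Prop := ann (amul (lvec l) v - v).

End Matsuo.

(* Main.v *)
Require Import Defs.
From HB Require Import structures.
From mathcomp Require Import all_boot all_order all_algebra.
Import GRing.Theory.

Fixpoint memn (x : nat) (s : seq nat) : bool :=
  if s is y :: s' then (x == y) || memn x s' else false.
Definition LN : seq (seq nat) := [:: [:: 0; 1; 2]; [:: 0; 4; 5]; [:: 1; 3; 5]; [:: 2; 3; 4]]%N.
Definition Cn (p q : nat) : bool := (p != q) && has (fun L => memn p L && memn q L) LN.
Definition Tn (p q r : nat) : bool := (p != q) && has (fun L => [&& memn p L, memn q L & memn r L]) LN.
Definition Pn (p q r : nat) : bool := [&& r != p, r != q & has (fun L => [&& memn p L, memn q L & memn r L]) LN].
Definition Wn (p q : nat) : nat :=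
  head 0%N [seq r <- iota 0 6 | Pn p q r].

Ltac ex6 := let H := fresh in case=> [|[|[|[|[|[|?]]]]]] H; try by [].
Ltac fin := vm_compute; intros; try discriminate; try reflexivity.

Lemma nat_key (p : nat) : (p < 6)%N -> forall q, (q < 6)%N -> forall r, (r < 6)%N -> Cn p q ->
  ((r == p) + (r == q) + (r == Wn p q))%N = Tn p q r.
Proof. by move: p; ex6; ex6; ex6; fin. Qed.
Lemma nat_ncoll (p : nat) : (p < 6)%N -> forall q, (q < 6)%N -> forall r, (r < 6)%N -> Cn p q = false ->
  Tn p q r = false.
Proof. by move: p; ex6; ex6; ex6; fin. Qed.

Lemma nat_wedge p : (p < 6)%N -> forall q, (q < 6)%N -> forall w, (w < 6)%N -> Cn p q -> Pn p q w -> w = Wn p q.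
Proof. by move: p; ex6; ex6; ex6; fin. Qed.

Lemma nat_wedge_ex p : (p < 6)%N -> forall q, (q < 6)%N -> Cn p q -> Pn p q (Wn p q) && (Wn p q < 6)%N.
Proof. by move: p; ex6; ex6; fin. Qed.

Lemma memE (p : pt) (u v w : pt) : (p \in [set u; v; w]) = [|| val p == val u, val p == val v | val p == val w].
Proof. by rewrite !inE !val_eqE ?orbA. Qed.
Lemma paV : val pa = 0%N. Proof. by rewrite /= inordK. Qed.
Lemma pbV : val pb = 1%N. Proof. by rewrite /= inordK. Qed.
Lemma pcV : val pc = 2%N. Proof. by rewrite /= inordK. Qed.
Lemma pxV : val px = 3%N. Proof. by rewrite /= inordK. Qed.
Lemma pyV : val py = 4%N. Proof. by rewrite /= inordK. Qed.
Lemma pzV : val pz = 5%N. Proof. by rewrite /= inordK. Qed.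

Lemma collE p q : coll p q = Cn (val p) (val q).
Proof.
rewrite /coll /lines /= !memE paV pbV pcV pxV pyV pzV -val_eqE.
by case: p q => [p Hp] [q Hq] /=; move: p Hp q Hq; ex6; ex6; fin.
Qed.

Lemma wedgeE p q : coll p q -> val (wedge p q) = Wn (val p) (val q).
Proof.
rewrite collE /wedge; case: pickP => [r | Hn] /=.
  rewrite /lines /= !memE paV pbV pcV pxV pyV pzV -!val_eqE => Hr Hc.
  apply: nat_wedge => //; try exact: ltn_ord.
  move: Hr Hc; case: p q r => [p Hp] [q Hq] [r Hr] /=; move: p Hp q Hq r Hr; ex6; ex6; ex6; fin.
move=> Hc; have /andP[HP Hw] := @nat_wedge_ex _ (ltn_ord p) _ (ltn_ord q) Hc.
have := Hn (Ordinal Hw).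
rewrite /lines /= !memE paV pbV pcV pxV pyV pzV -!val_eqE /= => H.
move: HP H; rewrite /Pn; clear Hn Hc Hw; case: p q => [p Hp] [q Hq] /=; move: p Hp q Hq; ex6; ex6; fin.
Qed.

Local Open Scope ring_scope.
From Stdlib Require Import Ring.

Definition o0 : pt := @Ordinal 6 0 isT.
Definition o1 : pt := @Ordinal 6 1 isT.
Definition o2 : pt := @Ordinal 6 2 isT.
Definition o3 : pt := @Ordinal 6 3 isT.
Definition o4 : pt := @Ordinal 6 4 isT.
Definition o5 : pt := @Ordinal 6 5 isT.

Section Alg.
Variable R : comPzRingType.
Hypothesis char2 : (2%:R : R) = 0.
Definition T := GRing.ComPzRing.sort R.
Definition radd (x y : T) : T := x + y.
Definition rmul (x y : T) : T := x * y.
Definition ropp (x : T) : T := - x.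
Definition rsub (x y : T) : T := x - y.
Definition r0 : T := 0.
Definition r1 : T := 1.
Lemma Rth : @ring_theory T r0 r1 radd rmul rsub ropp eq.
Proof. rewrite /r0 /r1 /radd /rmul /rsub /ropp. split=> //; [exact: add0r|exact: addrC|exact: addrA|exact: mul1r|exact: mulrC|exact: mulrA|exact: mulrDl|exact: subrr]. Qed.
Definition phi (b : bool) : T := if b then 1 else 0.
Lemma h2 : (1 + 1 : R) = 0. Proof. by rewrite -char2. Qed.
Lemma opp1 : (- 1 : R) = 1. Proof. by apply/eqP; rewrite -subr_eq0 -opprD h2 oppr0. Qed.
Lemma phi_morph : ring_morph r0 r1 radd rmul rsub ropp eq false true xorb andb xorb (fun b => b) Bool.eqb phi.
Proof.
rewrite /r0 /r1 /radd /rmul /rsub /ropp.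
split=> //.
- by case; case => /=; rewrite ?addr0 ?add0r ?h2.
- by case; case => /=; rewrite ?subr0 ?sub0r ?oppr0 ?opp1 ?h2.
- by case; case => /=; rewrite ?mulr1 ?mulr0 ?mul0r.
- by case=> /=; rewrite ?oppr0 ?opp1.
- by case; case.
Qed.
Add Ring R2 : Rth (morphism phi_morph).
Lemma raddE (x y : R) : x + y = radd x y. Proof. by []. Qed.
Lemma rmulE (x y : R) : x * y = rmul x y. Proof. by []. Qed.
Lemma roppE (x : R) : - x = ropp x. Proof. by []. Qed.
Lemma r0E : 0 = r0 :> R. Proof. by []. Qed.
Lemma r1E : 1 = r1 :> R. Proof. by []. Qed.
Definition fm (v : 'rV[R]_6) (i : 'I_6) : T := v 0 i.
Lemma fmE (v : 'rV[R]_6) i : v 0 i = fm v i. Proof. by []. Qed.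
Ltac ring2 := rewrite ?mulr1n ?mulr0n ?fmE; rewrite ?raddE ?rmulE ?roppE ?r0E ?r1E;
  match goal with |- ?a = ?b => change (@eq T a b) end; ring.

Lemma c2_of (x y a b : R) : a = b -> x + y = a - b -> x = y.
Proof.
move=> -> /eqP; rewrite subrr addr_eq0 => /eqP ->.
by apply/eqP; rewrite -subr_eq0 -opprD -mulr2n -mulr_natr char2 mulr0 oppr0.
Qed.

Lemma sum6 (F : pt -> R) : \sum_(p : pt) F p = F o0 + F o1 + F o2 + F o3 + F o4 + F o5.
Proof.
rewrite !big_ord_recl big_ord0 addr0 !addrA.
by congr (_ + _ + _ + _ + _ + _); congr F; apply: val_inj.
Qed.

Lemma bprod_coord (p q r : pt) : bprod R p q 0 r = (Tn (val p) (val q) (val r) : nat)%:R.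
Proof.
rewrite /bprod; case: ifP => Hc.
  rewrite !mxE /= -!val_eqE (@wedgeE p q Hc) -!natrD; rewrite collE in Hc.
  rewrite -(@nat_key _ (ltn_ord p) _ (ltn_ord q) _ (ltn_ord r) Hc).
  by rewrite ![val r == _]eq_sym.
rewrite collE in Hc.
by rewrite (@nat_ncoll _ (ltn_ord p) _ (ltn_ord q) _ (ltn_ord r) Hc) mxE.
Qed.

Lemma amul_coord (u v : A R) r :
  amul u v 0 r = \sum_p \sum_q u 0 p * v 0 q * (Tn (val p) (val q) (val r) : nat)%:R.
Proof.
rewrite /amul summxE; apply: eq_bigr => p _; rewrite summxE; apply: eq_bigr => q _.
by rewrite mxE bprod_coord.
Qed.

Lemma bvec_coord p q : bvec R p 0 q = (val p == val q : nat)%:R.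
Proof. by rewrite mxE /= val_eqE eq_sym. Qed.

Lemma lvec_coord (L : {set pt}) p : lvec R L 0 p = (p \in L : nat)%:R.
Proof.
rewrite /lvec summxE.
under eq_bigr => q _ do rewrite mxE /=.
case: (boolP (p \in L)) => Hp.
  rewrite (bigD1 p) //= eqxx big1 ?addr0 // => q /andP[_ Hq].
  by rewrite eq_sym (negbTE Hq).
rewrite big1 // => q Hq; case: eqP => // Epq.
by move: Hp; rewrite Epq Hq.
Qed.

Definition AE (w : A R) := [/\ w 0 o1 = w 0 o0, w 0 o2 = w 0 o0, w 0 o3 = w 0 o0,
   w 0 o4 = w 0 o0 & w 0 o5 = w 0 o0].


Arguments c2_of {x y a b}.
Lemma c2_of2 (x y a b c d : R) : a = b -> c = d -> x + y = (a - b) + (c - d) -> x = y.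
Proof. by move=> Hab -> H; apply: (c2_of Hab); rewrite H subrr addr0. Qed.

Arguments c2_of2 {x y a b c d}.
Ltac xp := rewrite ?amul_coord !sum6 ?bvec_coord ?lvec_coord ?memE ?paV ?pbV ?pcV ?pxV ?pyV ?pzV /= ?mxE.

Ltac derive := first [ match goal with H : _ = _ |- _ => apply: (c2_of H); ring2 end
  | match goal with H1 : _ = _, H2 : _ = _ |- _ => apply: (c2_of2 H1 H2); ring2 end ].

Lemma annP w : ann w <-> AE w.
Proof.
split.
  move=> Hw.
  have H := fun q r => congr1 (fun M : A R => M 0 r) (Hw (bvec R q)).
  have e1 : w 0 o1 = w 0 o2 by apply: (c2_of (H pa o1)); xp; ring2.
  have e2 : w 0 o4 = w 0 o5 by apply: (c2_of (H pa o4)); xp; ring2.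
  have e3 : w 0 o0 = w 0 o2 by apply: (c2_of (H pb o0)); xp; ring2.
  have e4 : w 0 o3 = w 0 o5 by apply: (c2_of (H pb o3)); xp; ring2.
  have e5 : w 0 o1 = w 0 o5 by apply: (c2_of (H px o1)); xp; ring2.
  by split; congruence.
move=> [e1 e2 e3 e4 e5] v; apply/rowP => r; rewrite [RHS]mxE.
case: r => [[|[|[|[|[|[|//]]]]]] Hr]; xp; rewrite ?e1 ?e2 ?e3 ?e4 ?e5; ring2.
Qed.

Definition E0 (i j k : pt) (v : A R) := v 0 i = v 0 j /\ v 0 j = v 0 k.
Definition E1 (v : A R) := [/\ v 0 o0 = v 0 o3, v 0 o1 = v 0 o4 & v 0 o2 = v 0 o5].

Lemma coord0 (u v : A R) : amul u v 0 o0 = u 0 o0 * v 0 o1 + u 0 o0 * v 0 o2 + u 0 o0 * v 0 o4 + u 0 o0 * v 0 o5 + u 0 o1 * v 0 o0 + u 0 o1 * v 0 o2 + u 0 o2 * v 0 o0 + u 0 o2 * v 0 o1 + u 0 o4 * v 0 o0 + u 0 o4 * v 0 o5 + u 0 o5 * v 0 o0 + u 0 o5 * v 0 o4.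
Proof. rewrite amul_coord !sum6 /=; ring2. Qed.
Lemma coord1 (u v : A R) : amul u v 0 o1 = u 0 o0 * v 0 o1 + u 0 o0 * v 0 o2 + u 0 o1 * v 0 o0 + u 0 o1 * v 0 o2 + u 0 o1 * v 0 o3 + u 0 o1 * v 0 o5 + u 0 o2 * v 0 o0 + u 0 o2 * v 0 o1 + u 0 o3 * v 0 o1 + u 0 o3 * v 0 o5 + u 0 o5 * v 0 o1 + u 0 o5 * v 0 o3.
Proof. rewrite amul_coord !sum6 /=; ring2. Qed.
Lemma coord2 (u v : A R) : amul u v 0 o2 = u 0 o0 * v 0 o1 + u 0 o0 * v 0 o2 + u 0 o1 * v 0 o0 + u 0 o1 * v 0 o2 + u 0 o2 * v 0 o0 + u 0 o2 * v 0 o1 + u 0 o2 * v 0 o3 + u 0 o2 * v 0 o4 + u 0 o3 * v 0 o2 + u 0 o3 * v 0 o4 + u 0 o4 * v 0 o2 + u 0 o4 * v 0 o3.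
Proof. rewrite amul_coord !sum6 /=; ring2. Qed.
Lemma coord3 (u v : A R) : amul u v 0 o3 = u 0 o1 * v 0 o3 + u 0 o1 * v 0 o5 + u 0 o2 * v 0 o3 + u 0 o2 * v 0 o4 + u 0 o3 * v 0 o1 + u 0 o3 * v 0 o2 + u 0 o3 * v 0 o4 + u 0 o3 * v 0 o5 + u 0 o4 * v 0 o2 + u 0 o4 * v 0 o3 + u 0 o5 * v 0 o1 + u 0 o5 * v 0 o3.
Proof. rewrite amul_coord !sum6 /=; ring2. Qed.
Lemma coord4 (u v : A R) : amul u v 0 o4 = u 0 o0 * v 0 o4 + u 0 o0 * v 0 o5 + u 0 o2 * v 0 o3 + u 0 o2 * v 0 o4 + u 0 o3 * v 0 o2 + u 0 o3 * v 0 o4 + u 0 o4 * v 0 o0 + u 0 o4 * v 0 o2 + u 0 o4 * v 0 o3 + u 0 o4 * v 0 o5 + u 0 o5 * v 0 o0 + u 0 o5 * v 0 o4.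
Proof. rewrite amul_coord !sum6 /=; ring2. Qed.
Lemma coord5 (u v : A R) : amul u v 0 o5 = u 0 o0 * v 0 o4 + u 0 o0 * v 0 o5 + u 0 o1 * v 0 o3 + u 0 o1 * v 0 o5 + u 0 o3 * v 0 o1 + u 0 o3 * v 0 o5 + u 0 o4 * v 0 o0 + u 0 o4 * v 0 o5 + u 0 o5 * v 0 o0 + u 0 o5 * v 0 o1 + u 0 o5 * v 0 o3 + u 0 o5 * v 0 o4.
Proof. rewrite amul_coord !sum6 /=; ring2. Qed.
Ltac coords := rewrite ?coord0 ?coord1 ?coord2 ?coord3 ?coord4 ?coord5.
Definition L0 := [set pa; pb; pc].
Lemma lv0_0 : lvec R L0 0 o0 = 1.
Proof. by rewrite lvec_coord /L0 memE ?paV ?pbV ?pcV ?pxV ?pyV ?pzV. Qed.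
Lemma lv0_1 : lvec R L0 0 o1 = 1.
Proof. by rewrite lvec_coord /L0 memE ?paV ?pbV ?pcV ?pxV ?pyV ?pzV. Qed.
Lemma lv0_2 : lvec R L0 0 o2 = 1.
Proof. by rewrite lvec_coord /L0 memE ?paV ?pbV ?pcV ?pxV ?pyV ?pzV. Qed.
Lemma lv0_3 : lvec R L0 0 o3 = 0.
Proof. by rewrite lvec_coord /L0 memE ?paV ?pbV ?pcV ?pxV ?pyV ?pzV. Qed.
Lemma lv0_4 : lvec R L0 0 o4 = 0.
Proof. by rewrite lvec_coord /L0 memE ?paV ?pbV ?pcV ?pxV ?pyV ?pzV. Qed.
Lemma lv0_5 : lvec R L0 0 o5 = 0.
Proof. by rewrite lvec_coord /L0 memE ?paV ?pbV ?pcV ?pxV ?pyV ?pzV. Qed.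
Lemma lm0_0 (v : A R) : amul (lvec R L0) v 0 o0 = v 0 o4 + v 0 o5.
Proof. rewrite coord0 ?lv0_0 ?lv0_1 ?lv0_2 ?lv0_3 ?lv0_4 ?lv0_5; ring2. Qed.
Lemma lm0_1 (v : A R) : amul (lvec R L0) v 0 o1 = v 0 o3 + v 0 o5.
Proof. rewrite coord1 ?lv0_0 ?lv0_1 ?lv0_2 ?lv0_3 ?lv0_4 ?lv0_5; ring2. Qed.
Lemma lm0_2 (v : A R) : amul (lvec R L0) v 0 o2 = v 0 o3 + v 0 o4.
Proof. rewrite coord2 ?lv0_0 ?lv0_1 ?lv0_2 ?lv0_3 ?lv0_4 ?lv0_5; ring2. Qed.
Lemma lm0_3 (v : A R) : amul (lvec R L0) v 0 o3 = v 0 o4 + v 0 o5.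
Proof. rewrite coord3 ?lv0_0 ?lv0_1 ?lv0_2 ?lv0_3 ?lv0_4 ?lv0_5; ring2. Qed.
Lemma lm0_4 (v : A R) : amul (lvec R L0) v 0 o4 = v 0 o3 + v 0 o5.
Proof. rewrite coord4 ?lv0_0 ?lv0_1 ?lv0_2 ?lv0_3 ?lv0_4 ?lv0_5; ring2. Qed.
Lemma lm0_5 (v : A R) : amul (lvec R L0) v 0 o5 = v 0 o3 + v 0 o4.
Proof. rewrite coord5 ?lv0_0 ?lv0_1 ?lv0_2 ?lv0_3 ?lv0_4 ?lv0_5; ring2. Qed.
Ltac lm0 := rewrite ?lm0_0 ?lm0_1 ?lm0_2 ?lm0_3 ?lm0_4 ?lm0_5.
Definition L1 := [set pa; py; pz].
Lemma lv1_0 : lvec R L1 0 o0 = 1.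
Proof. by rewrite lvec_coord /L1 memE ?paV ?pbV ?pcV ?pxV ?pyV ?pzV. Qed.
Lemma lv1_1 : lvec R L1 0 o1 = 0.
Proof. by rewrite lvec_coord /L1 memE ?paV ?pbV ?pcV ?pxV ?pyV ?pzV. Qed.
Lemma lv1_2 : lvec R L1 0 o2 = 0.
Proof. by rewrite lvec_coord /L1 memE ?paV ?pbV ?pcV ?pxV ?pyV ?pzV. Qed.
Lemma lv1_3 : lvec R L1 0 o3 = 0.
Proof. by rewrite lvec_coord /L1 memE ?paV ?pbV ?pcV ?pxV ?pyV ?pzV. Qed.
Lemma lv1_4 : lvec R L1 0 o4 = 1.
Proof. by rewrite lvec_coord /L1 memE ?paV ?pbV ?pcV ?pxV ?pyV ?pzV. Qed.
Lemma lv1_5 : lvec R L1 0 o5 = 1.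
Proof. by rewrite lvec_coord /L1 memE ?paV ?pbV ?pcV ?pxV ?pyV ?pzV. Qed.
Lemma lm1_0 (v : A R) : amul (lvec R L1) v 0 o0 = v 0 o1 + v 0 o2.
Proof. rewrite coord0 ?lv1_0 ?lv1_1 ?lv1_2 ?lv1_3 ?lv1_4 ?lv1_5; ring2. Qed.
Lemma lm1_1 (v : A R) : amul (lvec R L1) v 0 o1 = v 0 o2 + v 0 o3.
Proof. rewrite coord1 ?lv1_0 ?lv1_1 ?lv1_2 ?lv1_3 ?lv1_4 ?lv1_5; ring2. Qed.
Lemma lm1_2 (v : A R) : amul (lvec R L1) v 0 o2 = v 0 o1 + v 0 o3.
Proof. rewrite coord2 ?lv1_0 ?lv1_1 ?lv1_2 ?lv1_3 ?lv1_4 ?lv1_5; ring2. Qed.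
Lemma lm1_3 (v : A R) : amul (lvec R L1) v 0 o3 = v 0 o1 + v 0 o2.
Proof. rewrite coord3 ?lv1_0 ?lv1_1 ?lv1_2 ?lv1_3 ?lv1_4 ?lv1_5; ring2. Qed.
Lemma lm1_4 (v : A R) : amul (lvec R L1) v 0 o4 = v 0 o2 + v 0 o3.
Proof. rewrite coord4 ?lv1_0 ?lv1_1 ?lv1_2 ?lv1_3 ?lv1_4 ?lv1_5; ring2. Qed.
Lemma lm1_5 (v : A R) : amul (lvec R L1) v 0 o5 = v 0 o1 + v 0 o3.
Proof. rewrite coord5 ?lv1_0 ?lv1_1 ?lv1_2 ?lv1_3 ?lv1_4 ?lv1_5; ring2. Qed.
Ltac lm1 := rewrite ?lm1_0 ?lm1_1 ?lm1_2 ?lm1_3 ?lm1_4 ?lm1_5.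
Definition L2 := [set pb; px; pz].
Lemma lv2_0 : lvec R L2 0 o0 = 0.
Proof. by rewrite lvec_coord /L2 memE ?paV ?pbV ?pcV ?pxV ?pyV ?pzV. Qed.
Lemma lv2_1 : lvec R L2 0 o1 = 1.
Proof. by rewrite lvec_coord /L2 memE ?paV ?pbV ?pcV ?pxV ?pyV ?pzV. Qed.
Lemma lv2_2 : lvec R L2 0 o2 = 0.
Proof. by rewrite lvec_coord /L2 memE ?paV ?pbV ?pcV ?pxV ?pyV ?pzV. Qed.
Lemma lv2_3 : lvec R L2 0 o3 = 1.
Proof. by rewrite lvec_coord /L2 memE ?paV ?pbV ?pcV ?pxV ?pyV ?pzV. Qed.
Lemma lv2_4 : lvec R L2 0 o4 = 0.
Proof. by rewrite lvec_coord /L2 memE ?paV ?pbV ?pcV ?pxV ?pyV ?pzV. Qed.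
Lemma lv2_5 : lvec R L2 0 o5 = 1.
Proof. by rewrite lvec_coord /L2 memE ?paV ?pbV ?pcV ?pxV ?pyV ?pzV. Qed.
Lemma lm2_0 (v : A R) : amul (lvec R L2) v 0 o0 = v 0 o2 + v 0 o4.
Proof. rewrite coord0 ?lv2_0 ?lv2_1 ?lv2_2 ?lv2_3 ?lv2_4 ?lv2_5; ring2. Qed.
Lemma lm2_1 (v : A R) : amul (lvec R L2) v 0 o1 = v 0 o0 + v 0 o2.
Proof. rewrite coord1 ?lv2_0 ?lv2_1 ?lv2_2 ?lv2_3 ?lv2_4 ?lv2_5; ring2. Qed.
Lemma lm2_2 (v : A R) : amul (lvec R L2) v 0 o2 = v 0 o0 + v 0 o4.
Proof. rewrite coord2 ?lv2_0 ?lv2_1 ?lv2_2 ?lv2_3 ?lv2_4 ?lv2_5; ring2. Qed.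
Lemma lm2_3 (v : A R) : amul (lvec R L2) v 0 o3 = v 0 o2 + v 0 o4.
Proof. rewrite coord3 ?lv2_0 ?lv2_1 ?lv2_2 ?lv2_3 ?lv2_4 ?lv2_5; ring2. Qed.
Lemma lm2_4 (v : A R) : amul (lvec R L2) v 0 o4 = v 0 o0 + v 0 o2.
Proof. rewrite coord4 ?lv2_0 ?lv2_1 ?lv2_2 ?lv2_3 ?lv2_4 ?lv2_5; ring2. Qed.
Lemma lm2_5 (v : A R) : amul (lvec R L2) v 0 o5 = v 0 o0 + v 0 o4.
Proof. rewrite coord5 ?lv2_0 ?lv2_1 ?lv2_2 ?lv2_3 ?lv2_4 ?lv2_5; ring2. Qed.
Ltac lm2 := rewrite ?lm2_0 ?lm2_1 ?lm2_2 ?lm2_3 ?lm2_4 ?lm2_5.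
Definition L3 := [set pc; px; py].
Lemma lv3_0 : lvec R L3 0 o0 = 0.
Proof. by rewrite lvec_coord /L3 memE ?paV ?pbV ?pcV ?pxV ?pyV ?pzV. Qed.
Lemma lv3_1 : lvec R L3 0 o1 = 0.
Proof. by rewrite lvec_coord /L3 memE ?paV ?pbV ?pcV ?pxV ?pyV ?pzV. Qed.
Lemma lv3_2 : lvec R L3 0 o2 = 1.
Proof. by rewrite lvec_coord /L3 memE ?paV ?pbV ?pcV ?pxV ?pyV ?pzV. Qed.
Lemma lv3_3 : lvec R L3 0 o3 = 1.
Proof. by rewrite lvec_coord /L3 memE ?paV ?pbV ?pcV ?pxV ?pyV ?pzV. Qed.
Lemma lv3_4 : lvec R L3 0 o4 = 1.
Proof. by rewrite lvec_coord /L3 memE ?paV ?pbV ?pcV ?pxV ?pyV ?pzV. Qed.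
Lemma lv3_5 : lvec R L3 0 o5 = 0.
Proof. by rewrite lvec_coord /L3 memE ?paV ?pbV ?pcV ?pxV ?pyV ?pzV. Qed.
Lemma lm3_0 (v : A R) : amul (lvec R L3) v 0 o0 = v 0 o1 + v 0 o5.
Proof. rewrite coord0 ?lv3_0 ?lv3_1 ?lv3_2 ?lv3_3 ?lv3_4 ?lv3_5; ring2. Qed.
Lemma lm3_1 (v : A R) : amul (lvec R L3) v 0 o1 = v 0 o0 + v 0 o5.
Proof. rewrite coord1 ?lv3_0 ?lv3_1 ?lv3_2 ?lv3_3 ?lv3_4 ?lv3_5; ring2. Qed.
Lemma lm3_2 (v : A R) : amul (lvec R L3) v 0 o2 = v 0 o0 + v 0 o1.
Proof. rewrite coord2 ?lv3_0 ?lv3_1 ?lv3_2 ?lv3_3 ?lv3_4 ?lv3_5; ring2. Qed.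
Lemma lm3_3 (v : A R) : amul (lvec R L3) v 0 o3 = v 0 o1 + v 0 o5.
Proof. rewrite coord3 ?lv3_0 ?lv3_1 ?lv3_2 ?lv3_3 ?lv3_4 ?lv3_5; ring2. Qed.
Lemma lm3_4 (v : A R) : amul (lvec R L3) v 0 o4 = v 0 o0 + v 0 o5.
Proof. rewrite coord4 ?lv3_0 ?lv3_1 ?lv3_2 ?lv3_3 ?lv3_4 ?lv3_5; ring2. Qed.
Lemma lm3_5 (v : A R) : amul (lvec R L3) v 0 o5 = v 0 o0 + v 0 o1.
Proof. rewrite coord5 ?lv3_0 ?lv3_1 ?lv3_2 ?lv3_3 ?lv3_4 ?lv3_5; ring2. Qed.
Ltac lm3 := rewrite ?lm3_0 ?lm3_1 ?lm3_2 ?lm3_3 ?lm3_4 ?lm3_5.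

Lemma fus11 (u v : A R) : E1 u -> E1 v -> ann (amul u v).
Proof.
case=> f1 f2 f3 [g1 g2 g3]; apply/annP; rewrite /AE; coords.
by rewrite -?f1 -?f2 -?f3 -?g1 -?g2 -?g3; split; ring2.
Qed.

Lemma eig0_0 v : eig0 L0 v <-> E0 o3 o4 o5 v.
Proof.
rewrite /eig0 annP /AE /E0; lm0; split.
  by case=> e1 e2 e3 e4 e5; split; derive.
by case=> f1 f2; split; rewrite -?f2 -?f1; ring2.
Qed.

Lemma eig1_0 v : eig1 L0 v <-> E1 v.
Proof.
rewrite /eig1 annP /AE /E1 !mxE; lm0; split.
  by case=> e1 e2 e3 e4 e5; split; derive.
by case=> f1 f2 f3; split; rewrite -?f1 -?f2 -?f3; ring2.
Qed.

Lemma line0 :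
     (forall v : A R, exists u0 u1 : A R,
         [/\ eig0 L0 u0, eig1 L0 u1 & ann (v - (u0 + u1))]) /\
     (forall w : A R, eig0 L0 w -> eig1 L0 w -> ann w) /\
     (forall u v : A R, eig0 L0 u -> eig0 L0 v -> eig0 L0 (amul u v)) /\
     (forall u v : A R, eig0 L0 u -> eig1 L0 v -> eig1 L0 (amul u v)) /\
     (forall u v : A R, eig1 L0 u -> eig0 L0 v -> eig1 L0 (amul u v)) /\
     (forall u v : A R, eig1 L0 u -> eig1 L0 v -> ann (amul u v)).
Proof.
split.
  move=> v; pose u1 := \row_(j < 6) v 0 (nth o0 [:: o3; o4; o5; o3; o4; o5] j).
  exists (v - u1), u1; split.
  - by apply/eig0_0; rewrite /E0 !mxE /= !subrr.
  - by apply/eig1_0; rewrite /E1 !mxE /=.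
  - by rewrite subrK subrr; apply/annP; rewrite /AE !mxE.
split.
  by move=> w; rewrite eig0_0 eig1_0 /E0 /E1 => -[f1 f2] [g1 g2 g3]; apply/annP; split; congruence.
split.
  move=> u v; rewrite !eig0_0 /E0 => -[f1 f2] [g1 g2]; coords.
  by rewrite -?f2 -?f1 -?g2 -?g1; split; ring2.
split.
  move=> u v; rewrite eig0_0 !eig1_0 /E0 /E1 => -[f1 f2] [g1 g2 g3]; coords.
  by rewrite -?f2 -?f1 -?g1 -?g2 -?g3; split; ring2.
split.
  move=> u v; rewrite eig0_0 !eig1_0 /E0 /E1 => -[g1 g2 g3] [f1 f2]; coords.
  by rewrite -?f2 -?f1 -?g1 -?g2 -?g3; split; ring2.
by move=> u v; rewrite !eig1_0; apply: fus11.
Qed.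


Lemma eig0_1 v : eig0 L1 v <-> E0 o1 o2 o3 v.
Proof.
rewrite /eig0 annP /AE /E0; lm1; split.
  by case=> e1 e2 e3 e4 e5; split; derive.
by case=> f1 f2; split; rewrite -?f2 -?f1; ring2.
Qed.

Lemma eig1_1 v : eig1 L1 v <-> E1 v.
Proof.
rewrite /eig1 annP /AE /E1 !mxE; lm1; split.
  by case=> e1 e2 e3 e4 e5; split; derive.
by case=> f1 f2 f3; split; rewrite -?f1 -?f2 -?f3; ring2.
Qed.

Lemma line1 :
     (forall v : A R, exists u0 u1 : A R,
         [/\ eig0 L1 u0, eig1 L1 u1 & ann (v - (u0 + u1))]) /\
     (forall w : A R, eig0 L1 w -> eig1 L1 w -> ann w) /\
     (forall u v : A R, eig0 L1 u -> eig0 L1 v -> eig0 L1 (amul u v)) /\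
     (forall u v : A R, eig0 L1 u -> eig1 L1 v -> eig1 L1 (amul u v)) /\
     (forall u v : A R, eig1 L1 u -> eig0 L1 v -> eig1 L1 (amul u v)) /\
     (forall u v : A R, eig1 L1 u -> eig1 L1 v -> ann (amul u v)).
Proof.
split.
  move=> v; pose u1 := \row_(j < 6) v 0 (nth o0 [:: o3; o1; o2; o3; o1; o2] j).
  exists (v - u1), u1; split.
  - by apply/eig0_1; rewrite /E0 !mxE /= !subrr.
  - by apply/eig1_1; rewrite /E1 !mxE /=.
  - by rewrite subrK subrr; apply/annP; rewrite /AE !mxE.
split.
  by move=> w; rewrite eig0_1 eig1_1 /E0 /E1 => -[f1 f2] [g1 g2 g3]; apply/annP; split; congruence.
split.
  move=> u v; rewrite !eig0_1 /E0 => -[f1 f2] [g1 g2]; coords.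
  by rewrite -?f2 -?f1 -?g2 -?g1; split; ring2.
split.
  move=> u v; rewrite eig0_1 !eig1_1 /E0 /E1 => -[f1 f2] [g1 g2 g3]; coords.
  by rewrite -?f2 -?f1 -?g1 -?g2 -?g3; split; ring2.
split.
  move=> u v; rewrite eig0_1 !eig1_1 /E0 /E1 => -[g1 g2 g3] [f1 f2]; coords.
  by rewrite -?f2 -?f1 -?g1 -?g2 -?g3; split; ring2.
by move=> u v; rewrite !eig1_1; apply: fus11.
Qed.


Lemma eig0_2 v : eig0 L2 v <-> E0 o0 o2 o4 v.
Proof.
rewrite /eig0 annP /AE /E0; lm2; split.
  by case=> e1 e2 e3 e4 e5; split; derive.
by case=> f1 f2; split; rewrite -?f2 -?f1; ring2.
Qed.

Lemma eig1_2 v : eig1 L2 v <-> E1 v.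
Proof.
rewrite /eig1 annP /AE /E1 !mxE; lm2; split.
  by case=> e1 e2 e3 e4 e5; split; derive.
by case=> f1 f2 f3; split; rewrite -?f1 -?f2 -?f3; ring2.
Qed.

Lemma line2 :
     (forall v : A R, exists u0 u1 : A R,
         [/\ eig0 L2 u0, eig1 L2 u1 & ann (v - (u0 + u1))]) /\
     (forall w : A R, eig0 L2 w -> eig1 L2 w -> ann w) /\
     (forall u v : A R, eig0 L2 u -> eig0 L2 v -> eig0 L2 (amul u v)) /\
     (forall u v : A R, eig0 L2 u -> eig1 L2 v -> eig1 L2 (amul u v)) /\
     (forall u v : A R, eig1 L2 u -> eig0 L2 v -> eig1 L2 (amul u v)) /\
     (forall u v : A R, eig1 L2 u -> eig1 L2 v -> ann (amul u v)).
Proof.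
split.
  move=> v; pose u1 := \row_(j < 6) v 0 (nth o0 [:: o0; o4; o2; o0; o4; o2] j).
  exists (v - u1), u1; split.
  - by apply/eig0_2; rewrite /E0 !mxE /= !subrr.
  - by apply/eig1_2; rewrite /E1 !mxE /=.
  - by rewrite subrK subrr; apply/annP; rewrite /AE !mxE.
split.
  by move=> w; rewrite eig0_2 eig1_2 /E0 /E1 => -[f1 f2] [g1 g2 g3]; apply/annP; split; congruence.
split.
  move=> u v; rewrite !eig0_2 /E0 => -[f1 f2] [g1 g2]; coords.
  by rewrite -?f2 -?f1 -?g2 -?g1; split; ring2.
split.
  move=> u v; rewrite eig0_2 !eig1_2 /E0 /E1 => -[f1 f2] [g1 g2 g3]; coords.
  by rewrite -?f2 -?f1 -?g1 -?g2 -?g3; split; ring2.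
split.
  move=> u v; rewrite eig0_2 !eig1_2 /E0 /E1 => -[g1 g2 g3] [f1 f2]; coords.
  by rewrite -?f2 -?f1 -?g1 -?g2 -?g3; split; ring2.
by move=> u v; rewrite !eig1_2; apply: fus11.
Qed.


Lemma eig0_3 v : eig0 L3 v <-> E0 o0 o1 o5 v.
Proof.
rewrite /eig0 annP /AE /E0; lm3; split.
  by case=> e1 e2 e3 e4 e5; split; derive.
by case=> f1 f2; split; rewrite -?f2 -?f1; ring2.
Qed.

Lemma eig1_3 v : eig1 L3 v <-> E1 v.
Proof.
rewrite /eig1 annP /AE /E1 !mxE; lm3; split.
  by case=> e1 e2 e3 e4 e5; split; derive.
by case=> f1 f2 f3; split; rewrite -?f1 -?f2 -?f3; ring2.
Qed.

Lemma line3 :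
     (forall v : A R, exists u0 u1 : A R,
         [/\ eig0 L3 u0, eig1 L3 u1 & ann (v - (u0 + u1))]) /\
     (forall w : A R, eig0 L3 w -> eig1 L3 w -> ann w) /\
     (forall u v : A R, eig0 L3 u -> eig0 L3 v -> eig0 L3 (amul u v)) /\
     (forall u v : A R, eig0 L3 u -> eig1 L3 v -> eig1 L3 (amul u v)) /\
     (forall u v : A R, eig1 L3 u -> eig0 L3 v -> eig1 L3 (amul u v)) /\
     (forall u v : A R, eig1 L3 u -> eig1 L3 v -> ann (amul u v)).
Proof.
split.
  move=> v; pose u1 := \row_(j < 6) v 0 (nth o0 [:: o0; o1; o5; o0; o1; o5] j).
  exists (v - u1), u1; split.
  - by apply/eig0_3; rewrite /E0 !mxE /= !subrr.
  - by apply/eig1_3; rewrite /E1 !mxE /=.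
  - by rewrite subrK subrr; apply/annP; rewrite /AE !mxE.
split.
  by move=> w; rewrite eig0_3 eig1_3 /E0 /E1 => -[f1 f2] [g1 g2 g3]; apply/annP; split; congruence.
split.
  move=> u v; rewrite !eig0_3 /E0 => -[f1 f2] [g1 g2]; coords.
  by rewrite -?f2 -?f1 -?g2 -?g1; split; ring2.
split.
  move=> u v; rewrite eig0_3 !eig1_3 /E0 /E1 => -[f1 f2] [g1 g2 g3]; coords.
  by rewrite -?f2 -?f1 -?g1 -?g2 -?g3; split; ring2.
split.
  move=> u v; rewrite eig0_3 !eig1_3 /E0 /E1 => -[g1 g2 g3] [f1 f2]; coords.
  by rewrite -?f2 -?f1 -?g1 -?g2 -?g3; split; ring2.
by move=> u v; rewrite !eig1_3; apply: fus11.
Qed.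

Lemma eig1_any (l : {set pt}) (v : A R) : l \in lines -> (eig1 l v <-> E1 v).
Proof.
rewrite /lines !in_cons in_nil orbF.
case/orP => [/eqP -> | ]; first exact: eig1_0.
case/orP => [/eqP -> | ]; first exact: eig1_1.
case/orP => [/eqP -> | /eqP ->]; first exact: eig1_2.
exact: eig1_3.
Qed.

End Alg.

Theorem corollary5p15 (R : comPzRingType) (char2 : (2%:R : R) = 0) :
  (forall l : {set pt}, l \in lines ->
     (* A' = A'^l_0 + A'^l_1 *)
     (forall v : A R, exists u0 u1 : A R,
         [/\ eig0 l u0, eig1 l u1 & ann (v - (u0 + u1))]) /\
     (* A'^l_0 \cap A'^l_1 = 0 *)
     (forall w : A R, eig0 l w -> eig1 l w -> ann w) /\
     (* fusion law *)
     (forall u v : A R, eig0 l u -> eig0 l v -> eig0 l (amul u v)) /\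
     (forall u v : A R, eig0 l u -> eig1 l v -> eig1 l (amul u v)) /\
     (forall u v : A R, eig1 l u -> eig0 l v -> eig1 l (amul u v)) /\
     (forall u v : A R, eig1 l u -> eig1 l v -> ann (amul u v))) /\
  (* the 1-eigenspaces coincide for all lines *)
  (forall l l' : {set pt}, l \in lines -> l' \in lines ->
     forall v : A R, eig1 l v <-> eig1 l' v).
Proof.
split.
  move=> l; rewrite /lines !in_cons in_nil orbF.
  case/orP => [/eqP -> | ]; first exact: (@line0 R char2).
  case/orP => [/eqP -> | ]; first exact: (@line1 R char2).
  case/orP => [/eqP -> | /eqP ->]; first exact: (@line2 R char2).
  exact: (@line3 R char2).
move=> l l' Hl Hl' v.
rewrite (@eig1_any R char2 l v Hl) (@eig1_any R char2 l' v Hl'); done.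
Qed.
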